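(* There is a constant $C$, depending only on $\Gamma$ and $V$, such that every $(g,a)\in\Gamma$ satisfies $\|a_\perp\|\le C$. Moreover, if $(g,a)\in\Gamma_1$, then $a_\perp=0$.
   Context: $E(n)$ is the Euclidean group, with elements $(g,a)$, $g\in O(n)$, $a\in\mathbb R^n$, acting by $(g,a)x=gx+a$. $\Gamma\subset E(n)$ is a discrete, fixed-point-free subgroup. $\Gamma^*$ is the intersection of $\Gamma$ with the identity component of the closure of $\Gamma\cdot\mathbb R^n$ in $E(n)$. By a theorem of Wolf, $\Gamma^*$ is a normal subgroup of $\Gamma$ of finite index. There exist a subspace $V\subset\mathbb R^n$ and a toral subgroup $T\subset O(n)$ such that: - $T$ acts trivially on $V$; - $\Gamma^*\subset T\cdot V$, so every $(h,b)\in\Gamma^*$ has $b\in V$; - $\Gamma^*$ is isomorphic to a discrete uniform subgroup of $V$. Write $\mathbb R^n=V_\perp\oplus V$ orthogonally, and for $a\in\mathbb R^n$ write $a=a_\perp+a_=$ with $a_\perp\in V_\perp$ and $a_=\in V$. Define $\Gamma_1=\{(g,a)\in\Gamma: g|_{V_\perp}=I_{V_\perp}\}$. *)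

(* Defs.v *)
From mathcomp Require Import all_boot.
From Stdlib Require Import Reals.

Set Implicit Arguments.
Unset Strict Implicit.
Unset Printing Implicit Defensive.

Local Open Scope R_scope.

Definition vec (n : nat) := 'I_n -> R.
Definition mat (n : nat) := 'I_n -> 'I_n -> R.

Definition rsum (n : nat) (F : 'I_n -> R) : R := \big[Rplus/R0]_(i < n) F i.

Definition vzero (n : nat) : vec n := fun _ => 0.
Definition vadd (n : nat) (u v : vec n) : vec n := fun i => u i + v i.
Definition vopp (n : nat) (u : vec n) : vec n := fun i => - u i.
Definition vsub (n : nat) (u v : vec n) : vec n := fun i => u i - v i.
Definition vscale (n : nat) (c : R) (u : vec n) : vec n := fun i => c * u i.
Definition dot (n : nat) (u v : vec n) : R := rsum (fun i => u i * v i).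
Definition vnorm (n : nat) (u : vec n) : R := sqrt (dot u u).

Definition idm (n : nat) : mat n := fun i j => if i == j then 1 else 0.
Definition mtr (n : nat) (g : mat n) : mat n := fun i j => g j i.
Definition mmul (n : nat) (g h : mat n) : mat n :=
  fun i j => rsum (fun k => g i k * h k j).
Definition mapp (n : nat) (g : mat n) (v : vec n) : vec n :=
  fun i => rsum (fun k => g i k * v k).

Definition orthogonal (n : nat) (g : mat n) : Prop :=
  forall i j, mmul (mtr g) g i j = idm i j.

Definition subspace (n : nat) (V : vec n -> Prop) : Prop :=
  V (@vzero n) /\ (forall u v, V u -> V v -> V (vadd u v)) /\
  (forall c u, V u -> V (vscale c u)).

Definition vperp (n : nat) (V : vec n -> Prop) (u : vec n) : Prop :=
  forall v, V v -> dot u v = 0.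

(* u is the component a_perp of a in R^n = V_perp (+) V *)
Definition perp_part (n : nat) (V : vec n -> Prop) (a u : vec n) : Prop :=
  vperp V u /\ V (vsub a u).

Definition euc (n : nat) := (mat n * vec n)%type.

Definition inE (n : nat) (x : euc n) : Prop := orthogonal x.1.
Definition eid (n : nat) : euc n := (@idm n, @vzero n).
Definition emul (n : nat) (x y : euc n) : euc n :=
  (mmul x.1 y.1, vadd (mapp x.1 y.2) x.2).
Definition einv (n : nat) (x : euc n) : euc n :=
  (mtr x.1, vopp (mapp (mtr x.1) x.2)).
Definition eact (n : nat) (x : euc n) (v : vec n) : vec n :=
  vadd (mapp x.1 v) x.2.
Definition transl (n : nat) (t : vec n) : euc n := (@idm n, t).

(* topology of E(n) (as a subset of R^(n*n) x R^n, sup metric) *)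
Definition near (n : nat) (eps : R) (x y : euc n) : Prop :=
  (forall i j, Rabs (x.1 i j - y.1 i j) < eps) /\
  (forall i, Rabs (x.2 i - y.2 i) < eps).

Definition eopen (n : nat) (U : euc n -> Prop) : Prop :=
  forall x, U x -> exists eps, 0 < eps /\ forall y, near eps x y -> U y.

Definition eclosure (n : nat) (S : euc n -> Prop) (x : euc n) : Prop :=
  inE x /\ forall eps, 0 < eps -> exists y, S y /\ near eps x y.

Definition econnected (n : nat) (A : euc n -> Prop) : Prop :=
  ~ exists U W : euc n -> Prop,
      eopen U /\ eopen W /\
      (forall x, A x -> U x \/ W x) /\
      (forall x, A x -> U x -> W x -> False) /\
      (exists x, A x /\ U x) /\ (exists x, A x /\ W x).

Definition idcomp (n : nat) (S : euc n -> Prop) (x : euc n) : Prop :=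
  exists A : euc n -> Prop,
    econnected A /\ (forall y, A y -> S y) /\ A (@eid n) /\ A x.

Definition esubgroup (n : nat) (G : euc n -> Prop) : Prop :=
  (forall x, G x -> inE x) /\ G (@eid n) /\
  (forall x y, G x -> G y -> G (emul x y)) /\
  (forall x, G x -> G (einv x)).

Definition ediscrete (n : nat) (G : euc n -> Prop) : Prop :=
  forall x, G x -> exists eps, 0 < eps /\
    forall y, G y -> near eps x y -> y = x.

Definition fixed_point_free (n : nat) (G : euc n -> Prop) : Prop :=
  forall x, G x -> x <> @eid n -> forall v, eact x v <> v.

Definition gamRn (n : nat) (G : euc n -> Prop) (x : euc n) : Prop :=
  exists y t, G y /\ x = emul y (transl t).

Definition gamstar (n : nat) (G : euc n -> Prop) (x : euc n) : Prop :=
  G x /\ idcomp (eclosure (gamRn G)) x.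

Definition normal_in (n : nat) (H G : euc n -> Prop) : Prop :=
  forall x y, G x -> H y -> H (emul (emul x y) (einv x)).

Definition finite_index (n : nat) (H G : euc n -> Prop) : Prop :=
  exists reps : list (euc n),
    forall x, G x -> exists r y, List.In r reps /\ G r /\ H y /\ x = emul r y.

Definition gamma1 (n : nat) (G : euc n -> Prop) (V : vec n -> Prop)
  (x : euc n) : Prop :=
  G x /\ forall u, vperp V u -> mapp x.1 u = u.

(* closed, connected, abelian subgroup of O(n) (= compact connected abelian
   Lie subgroup, i.e. a torus) ; topology of O(n) via the entries *)
Definition mnear (n : nat) (eps : R) (g h : mat n) : Prop :=
  forall i j, Rabs (g i j - h i j) < eps.
Definition mopen (n : nat) (U : mat n -> Prop) : Prop :=
  forall g, U g -> exists eps, 0 < eps /\ forall h, mnear eps g h -> U h.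
Definition mconnected (n : nat) (A : mat n -> Prop) : Prop :=
  ~ exists U W : mat n -> Prop,
      mopen U /\ mopen W /\
      (forall g, A g -> U g \/ W g) /\
      (forall g, A g -> U g -> W g -> False) /\
      (exists g, A g /\ U g) /\ (exists g, A g /\ W g).
Definition toral (n : nat) (T : mat n -> Prop) : Prop :=
  (forall g, T g -> orthogonal g) /\ T (@idm n) /\
  (forall g h, T g -> T h -> T (mmul g h)) /\
  (forall g, T g -> T (mtr g)) /\
  (forall g h, T g -> T h -> mmul g h = mmul h g) /\
  (forall g, orthogonal g ->
     (forall eps, 0 < eps -> exists h, T h /\ mnear eps g h) -> T g) /\
  mconnected T.

Definition discrete_uniform_in (n : nat) (V L : vec n -> Prop) : Prop :=
  (forall v, L v -> V v) /\ L (@vzero n) /\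
  (forall u v, L u -> L v -> L (vsub u v)) /\
  (forall u, L u -> exists eps, 0 < eps /\
     forall v, L v -> vnorm (vsub u v) < eps -> v = u) /\
  (exists Rad, forall v, V v -> exists l, L l /\ vnorm (vsub v l) <= Rad).

Definition iso_to_lattice (n : nat) (H : euc n -> Prop) (V : vec n -> Prop)
  : Prop :=
  exists (L : vec n -> Prop) (phi : euc n -> vec n),
    discrete_uniform_in V L /\
    (forall x, H x -> L (phi x)) /\
    (forall x y, H x -> H y -> phi x = phi y -> x = y) /\
    (forall l, L l -> exists x, H x /\ phi x = l) /\
    (forall x y, H x -> H y -> phi (emul x y) = vadd (phi x) (phi y)).

(* Main.v *)
Require Import Defs.
From Stdlib Require Import Reals FunctionalExtensionality.
From mathcomp Require Import all_boot all_order all_algebra.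
From mathcomp Require Import Rstruct ring lra.
Import Order.TTheory GRing.Theory Num.Theory.
Set Implicit Arguments.
Unset Strict Implicit.
Local Open Scope ring_scope.

Lemma rsumE n (F : 'I_n -> R) : rsum F = (\sum_(i < n) F i).
Proof. reflexivity. Qed.

Lemma dotE n (u v : vec n) : dot u v = \sum_(i < n) u i * v i.
Proof. reflexivity. Qed.

Lemma mappE n (g : mat n) v i : mapp g v i = \sum_(k < n) g i k * v k.
Proof. reflexivity. Qed.

Lemma dotC n (u v : vec n) : dot u v = dot v u.
Proof. rewrite !dotE; apply: eq_bigr => i _; exact: mulrC. Qed.

Lemma dotDl n (a b c : vec n) : dot (vadd a b) c = dot a c + dot b c.
Proof. rewrite !dotE -big_split; apply: eq_bigr => i _ /=; exact: mulrDl. Qed.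

Lemma dotBl n (a b c : vec n) : dot (vsub a b) c = dot a c - dot b c.
Proof.
rewrite !dotE -sumrB; apply: eq_bigr => i _ /=; exact: mulrBl.
Qed.

Lemma dot0l n (c : vec n) : dot (@vzero n) c = 0.
Proof. rewrite dotE big1 // => i _; exact: mul0r. Qed.

Lemma dot_ge0 n (u : vec n) : 0 <= dot u u.
Proof. rewrite dotE; apply: sumr_ge0 => i _; exact: mulr_ge0_le0 || exact: sqr_ge0 || nra. Qed.

Lemma dot_eq0 n (u : vec n) : dot u u = 0 -> u = @vzero n.
Proof.
rewrite dotE => /eqP; rewrite psumr_eq0; last by move=> i _; nra.
move/allP => H; apply: functional_extensionality => i.
have /implyP := H i (mem_index_enum i); rewrite /= => /(_ isT) /eqP.
by move=> /eqP; rewrite mulf_eq0 orbb => /eqP.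
Qed.

Lemma mapp_mmul n (A B : mat n) v : mapp (mmul A B) v = mapp A (mapp B v).
Proof.
apply: functional_extensionality => i; rewrite !mappE.
rewrite /mmul.
under eq_bigr do rewrite rsumE mulr_suml.
rewrite exchange_big /=; apply: eq_bigr => k _.
rewrite mappE mulr_sumr; apply: eq_bigr => l _; exact: esym (mulrA (A i k) (B k l) (v l)).
Qed.

Lemma mapp_opp n (A : mat n) v : mapp A (vopp v) = vopp (mapp A v).
Proof.
apply: functional_extensionality => i; rewrite /vopp !mappE.
change (\sum_(k < n) A i k * - v k = - \sum_(k < n) A i k * v k).
rewrite -sumrN; by apply: eq_bigr => k _; rewrite mulrN.
Qed.

Lemma orth_dot n (g : mat n) (v w : vec n) : Defs.orthogonal g ->
  dot (mapp g v) (mapp g w) = dot v w.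
Proof.
move=> Hg; rewrite !dotE.
have E : forall i, mapp g v i * mapp g w i =
   \sum_(k < n) \sum_(l < n) (g i k * v k) * (g i l * w l).
  by move=> i; rewrite !mappE mulr_suml; apply: eq_bigr => k _; rewrite mulr_sumr.
under eq_bigr do rewrite E.
rewrite exchange_big /=; apply: eq_bigr => k _.
rewrite exchange_big /=.
transitivity (\sum_(l < n) v k * w l * idm k l).
  apply: eq_bigr => l _; rewrite -(Hg k l) /mmul rsumE mulr_sumr.
  apply: eq_bigr => i _; rewrite /mtr; change (g i k * v k * (g i l * w l) = v k * w l * (g i k * g i l)); ring.
rewrite (bigD1 k) //= big1 ?addr0.
  by rewrite /idm eqxx; change (v k * w k * 1 = v k * w k); rewrite mulr1.
by move=> l /negbTE; rewrite /idm eq_sym => ->; change (v k * w l * 0 = 0); rewrite mulr0.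
Qed.

Lemma vsub_ext n (a b : vec n) : vsub a b = vadd a (vopp b).
Proof. by []. Qed.

Definition repD n (reps : list (euc n)) : R :=
  List.fold_right (fun r acc => dot r.2 r.2 + acc) 0 reps.

Lemma repD_ge0 n (reps : list (euc n)) : 0 <= repD reps.
Proof. elim: reps => [|r l IH] /=; first exact: lexx.
by apply: addr_ge0 => //; exact: dot_ge0. Qed.

Lemma repD_in n (reps : list (euc n)) r : List.In r reps -> dot r.2 r.2 <= repD reps.
Proof.
elim: reps => [|r' l IH] //= [->|H].
  by rewrite lerDl repD_ge0.
by rewrite -[X in X <= _]add0r; apply: lerD; [exact: dot_ge0 | exact: IH].
Qed.

Lemma key n (Gam : euc n -> Prop) (V : vec n -> Prop) (T : mat n -> Prop) reps :
  normal_in (gamstar Gam) Gam ->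
  (forall x, Gam x -> exists r y, List.In r reps /\ Gam r /\ gamstar Gam y /\ x = emul r y) ->
  toral T ->
  (forall x, gamstar Gam x -> T x.1 /\ V x.2) ->
  forall y u, Gam y -> vperp V u -> 2 * dot y.2 u <= repD reps + dot u u.
Proof.
move=> Hnorm Hfin [HTo _] HTV y u Gy Hu.
have [r [h [Hr [Gr [Hh ->]]]]] := Hfin y Gy.
set z := emul (emul r h) (einv r).
have Hz : gamstar Gam z by apply: Hnorm.
have [Tz Vz] := HTV z Hz.
have Oz := HTo _ Tz.
have Ey : (emul r h).2 = vadd (mapp z.1 r.2) z.2.
  rewrite /z /emul /einv /= mapp_mmul mapp_opp.
  apply: functional_extensionality => i; rewrite /vadd /vopp /=.
  change (mapp r.1 h.2 i + r.2 i =
    mapp (mmul r.1 h.1) (mapp (mtr r.1) r.2) i +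
    (- mapp (mmul r.1 h.1) (mapp (mtr r.1) r.2) i + (mapp r.1 h.2 i + r.2 i))).
  ring.
rewrite Ey dotDl.
have -> : dot z.2 u = 0 by rewrite dotC; apply: Hu.
set w := mapp z.1 r.2.
have Ww : dot w w = dot r.2 r.2 by apply: orth_dot.
have H0 := dot_ge0 (vsub w u).
rewrite dotBl (dotC w (vsub w u)) (dotC u (vsub w u)) !dotBl Ww (dotC u w) in H0.
have := repD_in Hr.
lra.
Qed.

Fixpoint epow n (x : euc n) (m : nat) : euc n :=
  match m with 0 => @eid n | S m => emul x (epow x m) end.

Lemma epow_in n (G : euc n -> Prop) x m : esubgroup G -> G x -> G (epow x m).
Proof.
move=> [_ [He [Hm _]]] Gx; elim: m => [|m IH] //=; exact: Hm.
Qed.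

Lemma epow_dot n (x : euc n) (u : vec n) m :
  Defs.orthogonal x.1 -> mapp x.1 u = u -> dot x.2 u = dot u u ->
  dot (epow x m).2 u = m%:R * dot u u.
Proof.
move=> Ox Fu Au; elim: m => [|m IH] /=.
  by rewrite dot0l mul0r.
rewrite /emul /= dotDl Au.
rewrite -[in dot _ u]Fu orth_dot // IH -nat1r; ring.
Qed.

Lemma lemma3p2_aux (n : nat) (Gam : euc n -> Prop)
  (V : vec n -> Prop) (T : mat n -> Prop) :
  esubgroup Gam -> ediscrete Gam -> fixed_point_free Gam ->
  (* Wolf's theorem: Gamma^* is normal of finite index in Gamma *)
  normal_in (gamstar Gam) Gam -> finite_index (gamstar Gam) Gam ->
  subspace V -> toral T ->
  (forall h v, T h -> V v -> mapp h v = v) ->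
  (forall x, gamstar Gam x -> T x.1 /\ V x.2) ->
  iso_to_lattice (gamstar Gam) V ->
  (exists C : R, forall x u, Gam x -> perp_part V x.2 u -> Rle (vnorm u) C) /\
  (forall x u, gamma1 Gam V x -> perp_part V x.2 u -> u = @vzero n).
Proof.
move=> Hsub _ _ Hnorm [reps Hfin] HV HT _ HTV _.
have K := key Hnorm Hfin HT HTV.
have PP : forall x u, Gam x -> perp_part V x.2 u -> dot x.2 u = dot u u.
  move=> x u _ [Hu Hv].
  have : dot (vsub x.2 u) u = 0 by rewrite dotC; apply: Hu.
  rewrite dotBl => /eqP; rewrite subr_eq0 => /eqP //.
split.
  exists (sqrt (repD reps)) => x u Gx Hp.
  have := K x u Gx Hp.1; rewrite (PP x u Gx Hp) => H.
  rewrite /vnorm; apply: sqrt_le_1_alt; apply/RleP; lra.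
move=> x u [Gx Fx] Hp.
have Ox : Defs.orthogonal x.1 by apply: Hsub.1.
have Au := PP x u Gx Hp.
have Fu := Fx u Hp.1.
apply: dot_eq0.
set s := dot u u.
have s0 : 0 <= s := dot_ge0 u.
set D := repD reps.
have D0 : 0 <= D := repD_ge0 reps.
have Hm : forall m : nat, 2 * (m%:R * s) <= D + s.
  move=> m; rewrite -(epow_dot m Ox Fu Au).
  apply: K => //; [exact: epow_in | exact: Hp.1].
case: (ltrgt0P s) => [sp|sn|//]; last by lra.
pose m := Num.bound ((D + s) / s).
have Hb : (D + s) / s < m%:R by apply: archi_boundP; apply: divr_ge0; lra.
have : (D + s) < m%:R * s by rewrite -ltr_pdivrMr.
have := Hm m.
have : 0 <= m%:R * s by apply: mulr_ge0 => //; exact: ler0n.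
lra.
Qed.

Local Close Scope ring_scope.
Local Open Scope R_scope.

Theorem lemma3p2 (n : nat) (Gam : euc n -> Prop)
  (V : vec n -> Prop) (T : mat n -> Prop) :
  esubgroup Gam -> ediscrete Gam -> fixed_point_free Gam ->
  (* Wolf's theorem: Gamma^* is normal of finite index in Gamma *)
  normal_in (gamstar Gam) Gam -> finite_index (gamstar Gam) Gam ->
  (* V and T as in the context *)
  subspace V -> toral T ->
  (forall h v, T h -> V v -> mapp h v = v) ->
  (forall x, gamstar Gam x -> T x.1 /\ V x.2) ->
  iso_to_lattice (gamstar Gam) V ->
  (exists C : R, forall x u, Gam x -> perp_part V x.2 u -> vnorm u <= C) /\
  (forall x u, gamma1 Gam V x -> perp_part V x.2 u -> u = @vzero n).
Proof. exact: lemma3p2_aux. Qed.
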